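(* Let $n\ge 2$, $R=\mathbb{Q}[q^{\pm1},t^{\pm1}]$, and let $\widehat{C}^*=\widehat{C}^*(\widetilde{B}_n)$ be the augmented Salvetti complex with coefficients in $R_{q,t}$, and $\widehat{I}\subset\widehat{C}^*$ the subcomplex of $\sigma$-invariant elements. Let $C^*(B_n)$ be the Salvetti complex of the Artin group of type $B_n$ with coefficients in $R$, where $B_n$ has vertices $1,\dots,n$ (path $1-2-\dots-n$, edge $\{n-1,n\}$ labelled $4$, others $3$), vertices $1,\dots,n-1$ act by $-q$ and vertex $n$ by $-t$. Define $\beta:C^*(B_n)\to\widehat{C}^*$ on basis elements by: for $\Gamma\subset\{1,\dots,n\}$ let $\Gamma^+=\{j+1: j\in\Gamma, j\ge2\}\subset\{3,\dots,n+1\}$; if $1\notin\Gamma$ then $\beta(e_\Gamma)=e_{\Gamma^+}$, and if $1\in\Gamma$ then $\beta(e_\Gamma)=e_{\Gamma^+\cup\{1\}}+e_{\Gamma^+\cup\{2\}}$. Then $\beta$ is an isomorphism of cochain complexes from $C^*(B_n)$ onto $\widehat{I}$.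
   Context: Salvetti complex: for a Coxeter system $(W,S)$ with $S$ linearly ordered, an abelian representation $\eta$ of the Artin group into units of a ring $R$, and an $R$-module $M$, the cochain complex $C^*(W;M)$ has $C^k=\bigoplus_{\Gamma\subset S,\ |\Gamma|=k,\ |W_\Gamma|<\infty} M\,e_\Gamma$ and differential $d(e_\Gamma)=\sum (-1)^{\alpha(\Gamma,\Gamma')}\frac{W_{\Gamma'}(\eta)}{W_\Gamma(\eta)}e_{\Gamma'}$, the sum over $\Gamma'=\Gamma\cup\{s'\}\supsetneq\Gamma$ with $W_{\Gamma'}$ finite, $\alpha(\Gamma,\Gamma')=|\{s\in\Gamma: s<s'\}|$, and $W_\Gamma(\eta)=\sum_{w\in W_\Gamma}(-1)^{\ell(w)}\eta(\psi(w))$ ($\psi$ the canonical section $W\to$ Artin group). When generator $s$ acts by $-q$ (resp. $-t$), $W_\Gamma(\eta)=\sum_{w\in W_\Gamma}q^{a(w)}t^{b(w)}$ with $a(w)$, $b(w)$ the numbers of $q$-type and $t$-type letters in a reduced word. Type $\widetilde{B}_n$: vertices $S=\{1,\dots,n+1\}$, $1$ and $2$ joined to $3$, $i$ joined to $i+1$ for $3\le i\le n$, all labels $3$ except $\{n,n+1\}$ with label $4$; $R_{q,t}$ is $R$ with generators $1,\dots,n$ acting by $-q$ and $n+1$ by $-t$. Proper subsets of $S$ are exactly those with finite parabolic subgroup. The augmented complex is $\widehat{C}^*=C^*(\widetilde{B}_n;R_{q,t})\oplus R\,e_S$, with $d(e_\Gamma)$ for $|\Gamma|=n$ additionally containing the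 term $(-1)^{\alpha(\Gamma,S)}\frac{\widehat{W}(q,t)}{W_\Gamma(q,t)}e_S$, where $\widehat{W}(q,t)=[2(n-1)]_q!!\,[n]_q\prod_{i=0}^{n-1}(1+tq^i)$, $[m]_q=1+\dots+q^{m-1}$, $[2k]_q!!=\prod_{i=1}^k[2i]_q$. The involution $\sigma$ of $\widehat{C}^*$ is: $\sigma(e_\Gamma)=e_\Gamma$ if $1,2\notin\Gamma$; $\sigma(e_\Gamma)=-e_\Gamma$ if $1,2\in\Gamma$ (including $\Gamma=S$); and if $\Gamma$ contains exactly one of $1,2$, $\sigma(e_\Gamma)=e_{\Gamma'}$ where $\Gamma'$ is obtained by exchanging $1$ and $2$. *)

(* Defs.v *)
From HB Require Import structures.
From mathcomp Require Import all_boot all_order all_algebra.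
From mathcomp Require Import fraction.
Set Implicit Arguments. Unset Strict Implicit. Unset Printing Implicit Defensive.
Import Order.TTheory GRing.Theory Num.Theory.
Local Open Scope ring_scope.

(* The coefficient ring R = Q[q^{+-1}, t^{+-1}], realised inside the   *)
(* field K = Frac(Q[t][q]) as the elements x such that                 *)
(* x * q^a * t^b is a polynomial for some a, b.                        *)
Definition Pol := {poly {poly rat}}.
Definition K := {fraction Pol}.
Definition toK (p : Pol) : K := FracField.tofrac p.
Definition qK : K := toK ('X : Pol).
Definition tK : K := toK ((('X : {poly rat})%:P) : Pol).

Definition isLaurent (x : K) : Prop :=
  exists (a b : nat) (p : Pol), x * qK ^+ a * tK ^+ b = toK p.

(* Generic cochain machinery on a finite linearly ordered vertex set   *)
(* 'I_m (vertex number = ordinal + 1; order = natural order).          *)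
(* A cochain is a function {set 'I_m} -> K (coefficient of e_Gamma).   *)
Definition cochain (m : nat) := {set 'I_m} -> K.

Definition laurentC m (x : cochain m) : Prop := forall G, isLaurent (x G).

Definition ebasis m (G : {set 'I_m}) : cochain m := fun D => (D == G)%:R.

Definition alpha m (G : {set 'I_m}) (s : 'I_m) : nat := #|[set x in G | (x < s)%N]|.

Definition dbasis m (W : {set 'I_m} -> K) (G : {set 'I_m}) : cochain m :=
  fun D => \sum_(s : 'I_m | s \notin G)
             (D == s |: G)%:R * ((-1) ^+ alpha G s * (W (s |: G) / W G)).

Definition linext m m' (f : {set 'I_m} -> cochain m') (x : cochain m) : cochain m' :=
  fun D => \sum_(G : {set 'I_m}) x G * f G D.

Definition dcoch m (W : {set 'I_m} -> K) : cochain m -> cochain m :=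
  linext (dbasis W).

(* Poincare polynomials W_Gamma(q,t) of the finite parabolic subgroups *)
Definition qint (k : nat) : K := \sum_(i < k) qK ^+ i.
(* type A_k, all generators q :  [k+1]_q! *)
Definition PA (k : nat) : K := \prod_(1 <= i < k.+2) qint i.
(* type B_k, the end node beyond the 4-edge acts by t, the others by q *)
Definition PB (k : nat) : K := \prod_(i < k) (qint i.+1 * (1 + tK * qK ^+ i)).
(* type D_k, all generators q : [k]_q [2(k-1)]_q!! *)
Definition PD (k : nat) : K := qint k * \prod_(1 <= i < k) qint (2 * i).

Fixpoint runlen (P : pred nat) (fuel v : nat) : nat :=
  if fuel is f.+1 then (if P v then (runlen P f v.+1).+1 else 0%N) else 0%N.

Definition vB n (i : 'I_n) : nat := i.+1.
Definition memB n (G : {set 'I_n}) (v : nat) : bool := [exists i in G, vB i == v].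

(* product over maximal runs of consecutive vertices of Gamma; a run of
   length k is of type B_k if it contains vertex n, otherwise A_k *)
Definition WB n (G : {set 'I_n}) : K :=
  \prod_(1 <= v < n.+1 | memB G v && ((v == 1)%N || ~~ memB G v.-1))
     (let k := runlen (memB G) n v in
      if (v + k == n.+1)%N then PB k else PA k).

Definition vT n (j : 'I_n.+1) : nat := j.+1.
Definition memT n (G : {set 'I_n.+1}) (v : nat) : bool := [exists j in G, vT j == v].

(* W_Gamma for a proper subset Gamma of S: vertices 1,2 are attached to 3,
   3..n+1 form a path ending with the 4-edge {n,n+1}; n+1 acts by t. *)
Definition WTproper n (G : {set 'I_n.+1}) : K :=
  let a := (memT G 1 + memT G 2)%N in
  let first :=
    if memT G 3 then
      let k := runlen (memT G) n.+1 3 in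
      if (3 + k == n.+2)%N then PB (k + a)
      else if a == 0%N then PA k
      else if a == 1%N then PA k.+1
      else PD k.+2
    else (1 + qK) ^+ a in
  first *
  \prod_(4 <= v < n.+2 | memT G v && ~~ memT G v.-1)
     (let k := runlen (memT G) n.+1 v in
      if (v + k == n.+2)%N then PB k else PA k).

Definition What n : K :=
  (\prod_(1 <= i < n) qint (2 * i)) * qint n * \prod_(i < n) (1 + tK * qK ^+ i).

Definition WT n (G : {set 'I_n.+1}) : K :=
  if G == setT then What n else WTproper G.

Definition dB n : cochain n -> cochain n := dcoch (@WB n).
Definition dT n : cochain n.+1 -> cochain n.+1 := dcoch (@WT n).

Definition swap12 (v : nat) : nat :=
  if (v == 1)%N then 2%N else if (v == 2)%N then 1%N else v.
Definition swapset n (G : {set 'I_n.+1}) : {set 'I_n.+1} :=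
  [set j : 'I_n.+1 | memT G (swap12 (vT j))].

Definition sigma_basis n (G : {set 'I_n.+1}) : cochain n.+1 :=
  if ~~ memT G 1 && ~~ memT G 2 then ebasis G
  else if memT G 1 && memT G 2 then (fun D => - ebasis G D)
  else ebasis (swapset G).

Definition sigma n : cochain n.+1 -> cochain n.+1 := linext (@sigma_basis n).

Definition plusset n (G : {set 'I_n}) : {set 'I_n.+1} :=
  [set j : 'I_n.+1 | [exists i in G, (2 <= vB i)%N && (vT j == (vB i).+1)]].
Definition vset n (v : nat) : {set 'I_n.+1} := [set j : 'I_n.+1 | vT j == v].

Definition beta_basis n (G : {set 'I_n}) : cochain n.+1 :=
  if memB G 1 then
    (fun D => ebasis (plusset G :|: vset n 1) D + ebasis (plusset G :|: vset n 2) D)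
  else ebasis (plusset G).

Definition beta n : cochain n -> cochain n.+1 := linext (@beta_basis n).

(* Main.v *)
Require Import Defs.
From HB Require Import structures.
From mathcomp Require Import all_boot all_order all_algebra.
From mathcomp Require Import fraction zify ring.
Import Order.TTheory GRing.Theory Num.Theory.
Local Open Scope ring_scope.
Set Implicit Arguments. Unset Strict Implicit. Unset Printing Implicit Defensive.


Lemma sum_ind (T : finType) (X : T) (y : T -> K) :
  \sum_(G : T) (G == X)%:R * y G = y X.
Proof.
rewrite (bigD1 X) //= eqxx mul1r big1 ?addr0 // => G /negbTE ->; by rewrite mul0r.
Qed.

Lemma sum_ind' (T : finType) (X : T) (y : T -> K) :
  \sum_(G : T) y G * (G == X)%:R = y X.
Proof.
rewrite -[RHS](sum_ind X y); apply: eq_bigr => G _; by rewrite mulrC.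
Qed.

Lemma linext_comp m m' m'' (f : {set 'I_m'} -> cochain m'') (g : {set 'I_m} -> cochain m')
  (x : cochain m) D :
  linext f (linext g x) D = \sum_H x H * linext f (g H) D.
Proof.
rewrite /linext.
under eq_bigr => G _ do rewrite big_distrl /=.
rewrite exchange_big /=; apply: eq_bigr => H _.
rewrite big_distrr /=; apply: eq_bigr => G _; by rewrite mulrA.
Qed.

Lemma linext_dbasis m m' (f : {set 'I_m} -> cochain m') W G D :
  linext f (dbasis W G) D =
  \sum_(s : 'I_m | s \notin G) ((-1) ^+ alpha G s * (W (s |: G) / W G)) * f (s |: G) D.
Proof.
rewrite /linext /dbasis.
under eq_bigr => G' _ do rewrite big_distrl /=.
rewrite exchange_big /=; apply: eq_bigr => s _.
rewrite -(sum_ind (s |: G) (fun G' => ((-1) ^+ alpha G s * (W (s |: G) / W G)) * f G' D)).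
apply: eq_bigr => G' _; by rewrite !mulrA.
Qed.

Lemma linext_ebasis m m' (f : {set 'I_m} -> cochain m') A D :
  linext f (ebasis A) D = f A D.
Proof. rewrite /linext /ebasis; exact: sum_ind. Qed.

Lemma linext_ebasis2 m m' (f : {set 'I_m} -> cochain m') A B D :
  linext f (fun G => ebasis A G + ebasis B G) D = f A D + f B D.
Proof.
rewrite /linext; under eq_bigr => G _ do rewrite mulrDl.
by rewrite big_split /= -!/(linext _ _ _) !linext_ebasis.
Qed.


Definition LL m (i : 'I_m.+2) : 'I_m.+3 := lift ord0 i.

Lemma eqLL m (i j : 'I_m.+2) : (LL i == LL j) = (i == j).
Proof. exact: (inj_eq lift_inj). Qed.

Lemma LL0 m (i : 'I_m.+2) : (LL i == ord0) = false.
Proof. by apply/negbTE; rewrite eq_sym; exact: neq_lift. Qed.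

Lemma LL0' m (i : 'I_m.+2) : ((ord0 : 'I_m.+3) == LL i) = false.
Proof. by rewrite eq_sym LL0. Qed.

Lemma valLL m (i : 'I_m.+2) : nat_of_ord (LL i) = i.+1.
Proof. exact: lift0. Qed.

Lemma setT_ext m (A B : {set 'I_m.+3}) :
  (ord0 \in A) = (ord0 \in B) -> (forall i, (LL i \in A) = (LL i \in B)) -> A = B.
Proof.
move=> h0 hL; apply/setP => j; case: (unliftP ord0 j) => [i|] -> //; exact: hL.
Qed.

Lemma memT_ord n (A : {set 'I_n.+1}) (j : 'I_n.+1) : memT A (vT j) = (j \in A).
Proof.
apply/existsP/idP => [[j' /andP[hj /eqP e]]|hj]; last by exists j; rewrite hj eqxx.
have -> : j = j' by apply: val_inj; rewrite /vT in e; case: e.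
done.
Qed.

Lemma memB_ord n (A : {set 'I_n}) (j : 'I_n) : memB A (vB j) = (j \in A).
Proof.
apply/existsP/idP => [[j' /andP[hj /eqP e]]|hj]; last by exists j; rewrite hj eqxx.
have -> : j = j' by apply: val_inj; rewrite /vB in e; case: e.
done.
Qed.

Lemma memB1 m (H : {set 'I_m.+2}) : memB H 1%N = (ord0 \in H).
Proof. exact: (memB_ord H ord0). Qed.

Lemma memT1 m (A : {set 'I_m.+3}) : memT A 1%N = (ord0 \in A).
Proof. exact: (memT_ord A ord0). Qed.

Lemma memT2 m (A : {set 'I_m.+3}) : memT A 2%N = (LL ord0 \in A).
Proof. exact: (memT_ord A (LL ord0)). Qed.

Lemma in_plus0 m (H : {set 'I_m.+2}) : (ord0 \in plusset H) = false.
Proof. rewrite inE; apply/existsP => -[i /andP[_ /andP[_ /eqP]]] //. Qed.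

Lemma in_plusL m (H : {set 'I_m.+2}) i :
  (LL i \in plusset H) = (i != ord0) && (i \in H).
Proof.
rewrite inE; apply/existsP/andP => [[i' /andP[hi /andP[h2 /eqP e]]]|[hi0 hi]].
  rewrite /vT /vB valLL in e; case: e => e.
  have -> : i = i' by apply: val_inj.
  split=> //; rewrite -(inj_eq val_inj) /= -lt0n; exact: h2.
exists i; rewrite hi /vT /vB valLL eqxx andbT /=.
by case: i hi0 {hi} => -[|k] hk.
Qed.

Lemma in_v1_0 m : (ord0 : 'I_m.+3) \in vset m.+2 1.
Proof. by rewrite inE. Qed.
Lemma in_v1_L m (i : 'I_m.+2) : (LL i \in vset m.+2 1) = false.
Proof. by rewrite inE /vT valLL. Qed.
Lemma in_v2_0 m : ((ord0 : 'I_m.+3) \in vset m.+2 2) = false.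
Proof. by rewrite inE. Qed.
Lemma in_v2_L m (i : 'I_m.+2) : (LL i \in vset m.+2 2) = (i == ord0).
Proof. by rewrite inE /vT valLL. Qed.

Definition T0 m (H : {set 'I_m.+2}) := plusset H.
Definition T1 m (H : {set 'I_m.+2}) := plusset H :|: vset m.+2 1.
Definition T2 m (H : {set 'I_m.+2}) := plusset H :|: vset m.+2 2.

Definition memTE := (in_setU1, in_setU, in_set1, in_plus0, in_plusL, in_v1_0, in_v1_L, in_v2_0,
   in_v2_L, eqLL, LL0, LL0', eqxx).

Lemma T_add m (H : {set 'I_m.+2}) i : i != ord0 ->
  [/\ T0 (i |: H) = LL i |: T0 H, T1 (i |: H) = LL i |: T1 H &
      T2 (i |: H) = LL i |: T2 H].
Proof.
move=> hi; split; apply: setT_ext => [|j]; rewrite /T0 /T1 /T2 !memTE ?orbF //;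
 case: (eqVneq j i) => [->|hji] //=; rewrite ?hi ?orbT ?andbT //.
Qed.

Lemma T_ord0 m (H : {set 'I_m.+2}) :
  [/\ T1 (ord0 |: H) = ord0 |: T0 H, T2 (ord0 |: H) = LL ord0 |: T0 H &
      LL ord0 |: T1 H = ord0 |: T2 H].
Proof.
split; apply: setT_ext => [|j]; rewrite /T0 /T1 /T2 !memTE ?orbF //;
 case: (eqVneq j ord0) => [->|hj] //=; rewrite ?orbT ?andbT ?orbF //.
Qed.

Definition corr m (H : {set 'I_m.+2}) (A : {set 'I_m.+3}) :=
  (forall i : 'I_m.+2, i != ord0 -> (LL i \in A) = (i \in H)) /\
  ((ord0 \in A) + (LL ord0 \in A) = (ord0 \in H) :> nat)%N.

Lemma corr_T m (H : {set 'I_m.+2}) :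
  [/\ ord0 \in H -> corr H (T1 H), ord0 \in H -> corr H (T2 H) &
      ord0 \notin H -> corr H (T0 H)].
Proof.
split=> h; split; rewrite /T0 /T1 /T2 ?memTE ?(negbTE h) ?h //=;
  move=> i hi; rewrite !memTE hi ?orbF ?(negbTE hi) //=; by rewrite orbF.
Qed.

Lemma corr_add m (H : {set 'I_m.+2}) A i : corr H A -> i != ord0 ->
  corr (i |: H) (LL i |: A).
Proof.
move=> [h1 h2] hi; split.
  move=> j hj; rewrite !memTE h1 //.
by rewrite !memTE eq_sym (negbTE hi).
Qed.


Lemma runlen_shift (P Q : pred nat) f v :
  (forall w, (v <= w)%N -> Q w.+1 = P w) -> runlen Q f v.+1 = runlen P f v.
Proof.
elim: f v => [//|f IH] v h /=; rewrite h // IH // => w hw; apply: h; exact: ltnW.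
Qed.

Lemma runlen_fuel (P : pred nat) f e v :
  P (v + f)%N = false -> runlen P (f + e) v = runlen P f v.
Proof.
elim: f v => [|f IH] v /=.
  by rewrite addn0 => h; case: e => //= e; rewrite h.
by move=> h; rewrite IH // addSnnS.
Qed.

Definition WBp n (P : pred nat) : K :=
  \prod_(1 <= v < n.+1 | P v && ((v == 1)%N || ~~ P v.-1))
     (let k := runlen P n v in
      if (v + k == n.+1)%N then PB k else PA k).

Definition WTp n (Q : pred nat) : K :=
  let a := (Q 1 + Q 2)%N in
  let first :=
    if Q 3 then
      let k := runlen Q n.+1 3 in
      if (3 + k == n.+2)%N then PB (k + a)
      else if a == 0%N then PA k
      else if a == 1%N then PA k.+1
      else PD k.+2
    else (1 + qK) ^+ a in
  first *
  \prod_(4 <= v < n.+2 | Q v && ~~ Q v.-1)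
     (let k := runlen Q n.+1 v in
      if (v + k == n.+2)%N then PB k else PA k).

Lemma WB_WBp n (G : {set 'I_n}) : WB G = WBp n (memB G).
Proof. by []. Qed.

Lemma WTproper_WTp n (G : {set 'I_n.+1}) : WTproper G = WTp n (memT G).
Proof. by []. Qed.

Lemma PA1 : PA 1 = 1 + qK.
Proof.
rewrite /PA big_nat_recr //= big_nat1 /qint big_ord1 big_ord_recr /= big_ord1.
by rewrite !expr0 expr1 mul1r.
Qed.
Lemma WT_WB m (P Q : pred nat) : (forall v, (m.+2 < v)%N -> P v = false) ->
  (Q 1 + Q 2 = P 1 :> nat)%N -> (forall v, (2 <= v)%N -> Q v.+1 = P v) ->
  WTp m.+2 Q = WBp m.+2 P.
Proof.
move=> hP ha hQ.
rewrite /WTp /WBp; cbv zeta; rewrite ha.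
rewrite (@big_ltn_cond _ _ _ 1 m.+3) // (@big_ltn_cond _ _ _ 2 m.+3) //.
rewrite (big_add1 _ _ 3).
set rT := \prod_(3 <= i < _ | _) _.
set rB := \prod_(3 <= i < _ | _) _.
have -> : rT = rB.
  rewrite /rT /rB big_nat_cond [RHS]big_nat_cond.
  apply: eq_big => [v|v /andP[/andP[hv1 hv2] _]].
    case hv: (3 <= v < m.+3)%N => //=; case/andP: hv => hv1 _.
    rewrite !hQ ?(leq_trans _ hv1) //.
    case: v hv1 => // v hv1.
    rewrite hQ // [v.+1.-1]/=.
    by have -> : (v.+1 == 1)%N = false by case: v hv1.
  rewrite (runlen_shift _ _ (P := P)); last by move=> w hw; apply: hQ; exact: leq_trans (ltnW hv1) hw.
  rewrite (_ : runlen P m.+3 v = runlen P m.+2 v); last first.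
    by rewrite -(addn1 m.+2) runlen_fuel // hP //; lia.
  by rewrite addSn eqSS.
have hk1 : runlen Q m.+3 3 = runlen P m.+1 2.
  rewrite (runlen_shift _ _ (P := P)); last by move=> w hw; apply: hQ.
  by rewrite -(addn2 m.+1) runlen_fuel // hP.
have hk2 : runlen P m.+2 2 = runlen P m.+1 2 by rewrite -addn1 runlen_fuel // hP.
have hk3 : runlen P m.+2 1 = if P 1 then (runlen P m.+1 2).+1 else 0%N by [].
have hk0 : P 2 = false -> runlen P m.+1 2 = 0%N by move=> h; rewrite /= h.
rewrite hQ // hk1 hk2 hk3.
case h1: (P 1); case h2: (P 2); rewrite ?(hk0 h2);
  set k := runlen P m.+1 2; clearbody k rB;
  rewrite /= ?addn1 ?addn0 ?expr1 ?expr0 ?mul1r ?PA1 ?addSn ?add0n ?eqSS //.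
Qed.

Lemma memT_shift m (H : {set 'I_m.+2}) A v : corr H A -> (2 <= v)%N ->
  memT A v.+1 = memB H v.
Proof.
move=> [h1 h2] hv; apply/existsP/existsP => [[j /andP[hj /eqP e]]|[i /andP[hi /eqP e]]].
  case: (unliftP ord0 j) hj e => [i ->|->]; rewrite /vT => hj [e]; last by rewrite -e in hv.
  have {}e : (i : nat).+1 = v by rewrite -e; exact: (esym (lift0 i)).
  have hi0 : i != ord0 by apply/eqP => hi0; rewrite hi0 in e; rewrite -e in hv.
  by exists i; rewrite -h1 // hj /vB e eqxx.
have hi0 : i != ord0 by apply/eqP => hi0; rewrite hi0 /vB in e; rewrite -e in hv.
by exists (LL i); rewrite h1 // hi /vT valLL -e /vB eqxx.
Qed.

Lemma WT_corr m (H : {set 'I_m.+2}) A : corr H A -> WT A = WB H.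
Proof.
move=> hc; have [h1 h2] := hc.
rewrite /WT; case: eqP => [hA|_].
  by move: h2; rewrite hA !inE; case: (ord0 \in H).
rewrite WTproper_WTp WB_WBp; apply: WT_WB.
- move=> v hv; apply/existsP => -[i /andP[_ /eqP e]].
  move: (ltn_ord i); rewrite /vB in e; lia.
- by rewrite memT1 memT2 memB1.
- by move=> v hv; apply: memT_shift.
Qed.

Lemma alpha_sum n (G : {set 'I_n}) s :
  alpha G s = (\sum_(x < n) ((x \in G) && (x < s)))%N.
Proof.
rewrite /alpha -sum1_card big_mkcond /=; apply: eq_bigr => x _; rewrite inE.
by case: (_ && _).
Qed.

Lemma alpha_corr m (H : {set 'I_m.+2}) A i : corr H A -> i != ord0 ->
  alpha A (LL i) = alpha H i.
Proof.
move=> [h1 h2] hi; have hi' : (0 < i)%N by rewrite lt0n.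
rewrite !alpha_sum big_ord_recl.
rewrite (eq_bigr (fun j : 'I_m.+2 => nat_of_bool ((LL j \in A) && (j < i))%N)); last first.
  by move=> j _; rewrite /LL !lift0 ltnS.
rewrite (bigD1 ord0) // [in RHS](bigD1 ord0) //=.
rewrite (_ : (0 < bump 0 i)%N = true) // hi' !andbT addnA h2; congr (_ + _)%N.
apply: eq_bigr => j hj; rewrite h1 //.
Qed.

Lemma alpha_ord0 n (G : {set 'I_n.+1}) : alpha G ord0 = 0%N.
Proof. by rewrite alpha_sum big1 // => x _; rewrite ltn0 andbF. Qed.

Lemma alpha_LL0 m (A : {set 'I_m.+3}) : alpha A (LL ord0) = (ord0 \in A).
Proof.
rewrite alpha_sum big_ord_recl big1 ?addn0; first by rewrite valLL andbT.
by move=> j _; rewrite valLL lift0 ltnS ltn0 andbF.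
Qed.


Definition pre m (D : {set 'I_m.+3}) : {set 'I_m.+2} :=
  [set i : 'I_m.+2 | if i == ord0 then (ord0 \in D) || (LL ord0 \in D) else LL i \in D].

Definition both m (D : {set 'I_m.+3}) := (ord0 \in D) && (LL ord0 \in D).

Lemma in_pre0 m (D : {set 'I_m.+3}) : (ord0 \in pre D) = (ord0 \in D) || (LL ord0 \in D).
Proof. by rewrite inE eqxx. Qed.

Lemma in_preL m (D : {set 'I_m.+3}) i : i != ord0 -> (i \in pre D) = (LL i \in D).
Proof. by move=> hi; rewrite inE (negbTE hi). Qed.

Lemma pre_T m (H : {set 'I_m.+2}) :
  [/\ ord0 \in H -> pre (T1 H) = H, ord0 \in H -> pre (T2 H) = H &
      ord0 \notin H -> pre (T0 H) = H].
Proof.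
split=> h; apply/setP => i; case: (eqVneq i ord0) => [->|hi];
  rewrite ?in_pre0 ?in_preL // /T0 /T1 /T2 ?memTE ?hi ?(negbTE h) ?h //=;
  by rewrite ?(negbTE hi) ?orbF.
Qed.

Lemma G_eq m (D : {set 'I_m.+3}) : ~~ both D ->
  D = if ord0 \in D then T1 (pre D) else if LL ord0 \in D then T2 (pre D) else T0 (pre D).
Proof.
rewrite /both => hb.
case h0: (ord0 \in D); case h1: (LL ord0 \in D); rewrite ?h0 ?h1 in hb => //;
  apply: setT_ext => [|i]; rewrite /T0 /T1 /T2 !memTE ?h0 ?h1 //=;
  case: (eqVneq i ord0) => [->|hi]; rewrite ?in_pre0 ?in_preL ?h0 ?h1 ?orbF //=.
Qed.

Lemma bb_eq m (H : {set 'I_m.+2}) :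
  beta_basis H = if ord0 \in H then (fun D => ebasis (T1 H) D + ebasis (T2 H) D)
                 else ebasis (T0 H).
Proof. by rewrite /beta_basis memB1. Qed.

Lemma eb_eq m (A D : {set 'I_m}) : ebasis A D = (D == A)%:R.
Proof. by []. Qed.

Lemma bb_closed m (H : {set 'I_m.+2}) D :
  beta_basis H D = if both D then 0 else (H == pre D)%:R.
Proof.
have -> : beta_basis H D = if ord0 \in H then (D == T1 H)%:R + (D == T2 H)%:R
    else (D == T0 H)%:R by rewrite bb_eq; case: ifP.
rewrite /both; case hb: (_ && _).
  case/andP: hb => h0 h1.
  have n1 : (D == T1 H) = false.
    by apply/negbTE/eqP => e; move: h1; rewrite e /T1 !memTE.
  have n2 : (D == T2 H) = false.
    by apply/negbTE/eqP => e; move: h0; rewrite e /T2 !memTE.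
  have n0 : (D == T0 H) = false.
    by apply/negbTE/eqP => e; move: h0; rewrite e /T0 !memTE.
  by rewrite n1 n2 n0 addr0; case: ifP.
have hD := G_eq (negbT hb).
have [p1 p2 p0] := pre_T H.
case: (eqVneq H (pre D)) => [eH|ne].
  subst H; rewrite in_pre0.
  case h0: (ord0 \in D); case h1: (LL ord0 \in D); rewrite ?h0 ?h1 in hb hD => //=.
  - have -> : (D == T2 (pre D)) = false.
      by apply/negbTE/eqP => e; move: h0; rewrite e /T2 !memTE.
    by rewrite -hD eqxx addr0.
  - have -> : (D == T1 (pre D)) = false.
      by apply/negbTE/eqP => e; move: h1; rewrite e /T1 !memTE.
    by rewrite -hD eqxx add0r.
  - by rewrite -hD eqxx.
have n1 : ord0 \in H -> (D == T1 H) = false.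
  move=> h; apply/negbTE/eqP => e; move: ne; by rewrite e (p1 h) eqxx.
have n2 : ord0 \in H -> (D == T2 H) = false.
  move=> h; apply/negbTE/eqP => e; move: ne; by rewrite e (p2 h) eqxx.
have n0 : ord0 \notin H -> (D == T0 H) = false.
  move=> h; apply/negbTE/eqP => e; move: ne; by rewrite e (p0 h) eqxx.
by case: ifP => h; rewrite ?n1 ?n2 ?addr0 // n0 ?h.
Qed.

Lemma beta_closed m (x : cochain m.+2) D :
  beta x D = if both D then 0 else x (pre D).
Proof.
rewrite /beta /linext; under eq_bigr => H _ do rewrite bb_closed.
case: ifP => _; first by rewrite big1 // => H _; rewrite mulr0.
exact: sum_ind'.
Qed.

Lemma in_swap0 m (G : {set 'I_m.+3}) : (ord0 \in swapset G) = (LL ord0 \in G).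
Proof. by rewrite inE -memT2. Qed.

Lemma in_swapL0 m (G : {set 'I_m.+3}) : (LL ord0 \in swapset G) = (ord0 \in G).
Proof. by rewrite inE /vT valLL -memT1. Qed.

Lemma in_swapL m (G : {set 'I_m.+3}) i : i != ord0 -> (LL i \in swapset G) = (LL i \in G).
Proof.
move=> hi; rewrite inE -memT_ord /vT valLL /swap12 /=.
by case: i hi => -[|k] hk.
Qed.

Lemma swapsetK m (G : {set 'I_m.+3}) : swapset (swapset G) = G.
Proof.
apply: setT_ext => [|i]; first by rewrite in_swap0 in_swapL0.
case: (eqVneq i ord0) => [->|hi]; first by rewrite in_swapL0 in_swap0.
by rewrite !in_swapL.
Qed.

Lemma pre_swap m (D : {set 'I_m.+3}) : pre (swapset D) = pre D.
Proof.
apply/setP => i; case: (eqVneq i ord0) => [->|hi].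
  by rewrite !in_pre0 in_swap0 in_swapL0 orbC.
by rewrite !in_preL // in_swapL.
Qed.

Definition oneD m (D : {set 'I_m.+3}) := (ord0 \in D) != (LL ord0 \in D).

Lemma sb_closed m (G D : {set 'I_m.+3}) :
  sigma_basis G D = (if both D then -1 else 1) * (G == (if oneD D then swapset D else D))%:R.
Proof.
have -> : sigma_basis G D = if ~~ (ord0 \in G) && ~~ (LL ord0 \in G) then (D == G)%:R
    else if (ord0 \in G) && (LL ord0 \in G) then - (D == G)%:R else (D == swapset G)%:R.
  by rewrite /sigma_basis memT1 memT2; case: ifP => _ //; case: ifP.
rewrite /both /oneD.
case: (eqVneq G (if (ord0 \in D) != (LL ord0 \in D) then swapset D else D)) => [->|ne].
  case h0: (ord0 \in D); case h1: (LL ord0 \in D);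
    rewrite /= ?in_swap0 ?in_swapL0 ?h0 ?h1 /= ?swapsetK ?eqxx ?mulr1 //.
rewrite mulr0.
case h0: (ord0 \in G); case h1: (LL ord0 \in G) => /=.
- suff -> : (D == G) = false by rewrite oppr0.
  by apply/negbTE/eqP => e; subst D; move: ne; rewrite h0 h1 /= eqxx.
- suff -> : (D == swapset G) = false by [].
  apply/negbTE/eqP => e; subst D; move: ne.
  by rewrite in_swap0 in_swapL0 h0 h1 /= swapsetK eqxx.
- suff -> : (D == swapset G) = false by [].
  apply/negbTE/eqP => e; subst D; move: ne.
  by rewrite in_swap0 in_swapL0 h0 h1 /= swapsetK eqxx.
- suff -> : (D == G) = false by [].
  by apply/negbTE/eqP => e; subst D; move: ne; rewrite h0 h1 /= eqxx.
Qed.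

Lemma sigma_closed m (y : cochain m.+3) D :
  sigma y D = (if both D then -1 else 1) * y (if oneD D then swapset D else D).
Proof.
rewrite /sigma /linext; under eq_bigr => G _ do rewrite sb_closed mulrCA.
by rewrite -big_distrr /= sum_ind'.
Qed.

Lemma splitT m (F : 'I_m.+3 -> K) (A : {set 'I_m.+3}) :
  \sum_(u | u \notin A) F u =
  (if ord0 \notin A then F ord0 else 0) + (if LL ord0 \notin A then F (LL ord0) else 0)
  + \sum_(i : 'I_m.+2 | i != ord0) (if LL i \notin A then F (LL i) else 0).
Proof.
by rewrite big_mkcond big_ord_recl (bigD1 ord0) //= addrA.
Qed.

Lemma splitB m (F : 'I_m.+2 -> K) (H : {set 'I_m.+2}) :
  \sum_(u | u \notin H) F u =
  (if ord0 \notin H then F ord0 else 0)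
  + \sum_(i : 'I_m.+2 | i != ord0) (if i \notin H then F i else 0).
Proof.
by rewrite big_mkcond (bigD1 ord0) //=.
Qed.


Lemma Tmem m (H : {set 'I_m.+2}) :
  [/\ ord0 \in T1 H, (LL ord0 \in T1 H) = false, (ord0 \in T2 H) = false &
      LL ord0 \in T2 H].
Proof. by rewrite /T0 /T1 /T2 !memTE. Qed.

Lemma Tmem0 m (H : {set 'I_m.+2}) :
  (ord0 \in T0 H) = false /\ (LL ord0 \in T0 H) = false.
Proof. by rewrite /T0 /T1 /T2 !memTE. Qed.

Lemma arith1 (l a b c d : K) : a + b = 0 -> l = c + d -> l = 0 + a + c + (b + 0 + d).
Proof. by move=> h ->; rewrite add0r addr0 addrACA h add0r. Qed.

Lemma key m (H : {set 'I_m.+2}) D :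
  linext (@beta_basis m.+2) (dbasis (@WB m.+2) H) D =
  linext (dbasis (@WT m.+2)) (beta_basis H) D.
Proof.
rewrite linext_dbasis bb_eq.
have [c1 c2 c0] := corr_T H.
have [m1 m2 m3 m4] := Tmem H.
have [m5 m6] := Tmem0 H.
have [e1 e2 e3] := T_ord0 H.
case h0: (ord0 \in H).
- rewrite linext_ebasis2 /dbasis !splitT splitB h0 m1 m2 m3 m4 /= add0r.
  apply: arith1.
    rewrite alpha_LL0 m1 alpha_ord0 e3 (WT_corr (c1 h0)) (WT_corr (c2 h0)) expr1 expr0.
    by rewrite mulN1r mul1r mulrN addNr.
  rewrite -big_split /=; apply: eq_bigr => i hi.
  have [h1 _] := c1 h0; have [h2 _] := c2 h0.
  rewrite (h1 i hi) (h2 i hi); case hiH: (i \in H); first by rewrite addr0.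
  have [_ f1 f2] := T_add H hi.
  rewrite bb_eq in_setU1 h0 orbT !eb_eq f1 f2 /=.
  rewrite (alpha_corr (c1 h0) hi) (alpha_corr (c2 h0) hi).
  rewrite (WT_corr (corr_add (c1 h0) hi)) (WT_corr (corr_add (c2 h0) hi)).
  rewrite (WT_corr (c1 h0)) (WT_corr (c2 h0)).
  ring.
- rewrite linext_ebasis /dbasis splitT splitB h0 m5 m6 /=.
  have h0' : ord0 \notin H by rewrite h0.
  have [d1 _ _] := corr_T (ord0 |: H).
  have d1' := d1 (setU11 _ _).
  congr (_ + _).
    rewrite bb_eq setU11 !eb_eq /= -e1 -e2 !alpha_ord0 alpha_LL0 m5 expr0.
    rewrite (WT_corr d1') (WT_corr (c0 h0')).
    have [d1'' _ _] := corr_T (ord0 |: H).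
    have [_ d2 _] := corr_T (ord0 |: H).
    rewrite (WT_corr (d2 (setU11 _ _))).
    ring.
  apply: eq_bigr => i hi.
  have [h1 _] := c0 h0'.
  rewrite (h1 i hi); case hiH: (i \in H) => //=.
  have [f0 _ _] := T_add H hi.
  have hn : ord0 \in i |: H = false by rewrite in_setU1 h0 orbF eq_sym (negbTE hi).
  rewrite bb_eq hn !eb_eq f0 /=.
  rewrite (alpha_corr (c0 h0') hi) (WT_corr (corr_add (c0 h0') hi)) (WT_corr (c0 h0')).
  ring.
Qed.


Lemma two_neq0 : (2%:R : K) != 0.
Proof.
have -> : (2%:R : K) = toK 2%:R by rewrite /toK rmorph_nat.
rewrite /toK tofrac_eq0 -!polyC_natr !polyC_eq0.
by rewrite pnatr_eq0.
Qed.

Lemma laurent0 : isLaurent 0.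
Proof. by exists 0%N, 0%N, 0; rewrite !mul0r /toK tofrac0. Qed.

Definition img m (G : {set 'I_m.+2}) := if ord0 \in G then T1 G else T0 G.

Lemma img_prop m (G : {set 'I_m.+2}) : both (img G) = false /\ pre (img G) = G.
Proof.
have [p1 _ p0] := pre_T G; have [m1 m2 _ _] := Tmem G; have [m5 m6] := Tmem0 G.
rewrite /img /both; case: ifP => h; split.
- by rewrite m2 andbF.
- exact: p1.
- by rewrite m5.
- by apply: p0; rewrite h.
Qed.

Theorem mainTheorem4 (n : nat) (hn : (2 <= n)%N) :
  (* beta is a cochain map *)
  (forall x : cochain n, laurentC x ->
     forall D, beta (dB x) D = dT (beta x) D) /\
  (* beta takes values in hat I (R-valued and sigma-invariant) *)
  (forall x : cochain n, laurentC x ->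
     laurentC (beta x) /\ forall D, sigma (beta x) D = beta x D) /\
  (* beta is injective *)
  (forall x y : cochain n, laurentC x -> laurentC y ->
     (forall D, beta x D = beta y D) -> forall G, x G = y G) /\
  (* beta is onto hat I *)
  (forall y : cochain n.+1, laurentC y -> (forall D, sigma y D = y D) ->
     exists x : cochain n, laurentC x /\ forall D, beta x D = y D).
Proof.
case: n hn => [|[|m]] // _.
split; [|split; [|split]].
- move=> x _ D; rewrite /beta /dB /dT /dcoch !linext_comp.
  by apply: eq_bigr => H _; rewrite key.
- move=> x hx; split.
    by move=> D; rewrite beta_closed; case: ifP => _ //; exact: laurent0.
  move=> D; rewrite sigma_closed /both /oneD.
  case h0: (ord0 \in D); case h1: (LL ord0 \in D) => /=; rewrite ?mul1r //.
  + by rewrite beta_closed /both h0 h1 /= mulr0.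
  + by rewrite !beta_closed /both in_swap0 in_swapL0 h0 h1 pre_swap.
  + by rewrite !beta_closed /both in_swap0 in_swapL0 h0 h1 pre_swap.
- move=> x y _ _ hxy G; have [hb hp] := img_prop G.
  by move: (hxy (img G)); rewrite !beta_closed hb hp.
- move=> y hy hs; exists (fun G => y (img G)); split; first by move=> G; exact: hy.
  move=> D; rewrite beta_closed /img in_pre0; have := hs D.
  rewrite sigma_closed /both /oneD.
  case h0: (ord0 \in D); case h1: (LL ord0 \in D) => /=; rewrite ?mul1r.
  + move=> e; apply/esym/eqP.
    have : (2%:R : K) * y D == 0 by rewrite mulr_natl mulr2n -{1}e mulN1r addNr.
    by rewrite mulf_eq0 (negbTE two_neq0).
  + move=> _; have hD := G_eq (D := D); rewrite /both h0 h1 in hD.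
    by rewrite -hD.
  + move=> <-; have hD := G_eq (D := swapset D).
    rewrite /both in_swap0 in_swapL0 h0 h1 pre_swap in hD.
    by rewrite -hD.
  + move=> _; have hD := G_eq (D := D); rewrite /both h0 h1 in hD.
    by rewrite -hD.
Qed.
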